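(* Let $1\le p<\infty$ and let $f$ be a continuous real function on $[0,1]$. Then there are constants $0<c_1\le c_2$, independent of $f$ and $t$, such that for all $0<t\le 1$, $$c_1\, t\,\upsilon_p\big([t^{-1}]^p,f\big)\le K(f,t;L^\infty,BV_p)\le c_2\, t\,\upsilon_p\big([t^{-1}]^p,f\big),$$ where $[x]$ denotes the integer part of $x$.
   Context: For a function $f$ on $[0,1]$ and a positive integer $n$, the modulus of $p$-variation is $\upsilon_p(n,f)=\sup\big(\sum_{j=1}^n|f(I_j)|^p\big)^{1/p}$, the supremum over all collections $\{I_j\}_{j=1}^n$ of nonoverlapping subintervals of $[0,1]$, where $f(I)=f(\sup I)-f(\inf I)$. The $p$-variation is $\mathrm{Var}_p(g)=\sup\big(\sum_j|g(I_j)|^p\big)^{1/p}$, the supremum over all finite collections of nonoverlapping subintervals of $[0,1]$, and $BV_p$ is the space of functions on $[0,1]$ with $\mathrm{Var}_p(g)<\infty$. The $K$-functional is $K(f,t;L^\infty,BV_p)=\inf_{g\in BV_p}\big(\|f-g\|_{L^\infty}+t\,\mathrm{Var}_p(g)\big)$. *)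

(* Defs.v *)
From HB Require Import structures.
From mathcomp Require Import all_boot all_order all_algebra.
From mathcomp Require Import all_classical all_reals all_analysis.
Set Implicit Arguments. Unset Strict Implicit. Unset Printing Implicit Defensive.
Import Order.TTheory GRing.Theory Num.Theory.
Import numFieldNormedType.Exports.
Local Open Scope classical_set_scope.
Local Open Scope ring_scope.

Section Defs.
Variable R : realType.

(* A family of n intervals [a j, b j] in [0,1], pairwise nonoverlapping
   (interiors disjoint).  Only endpoints matter since f(I)=f(sup I)-f(inf I). *)
Definition nonoverlapping (n : nat) (a b : 'I_n -> R) : Prop :=
  (forall j, 0 <= a j /\ a j <= b j /\ b j <= 1) /\
  (forall i j, i != j -> b i <= a j \/ b j <= a i).

Definition pvar_sum (p : R) (g : R -> R) (n : nat) (a b : 'I_n -> R) : R :=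
  (\sum_(j < n) `|g (b j) - g (a j)| `^ p) `^ p^-1.

Definition upsilon (p : R) (n : nat) (f : R -> R) : \bar R :=
  ereal_sup [set x | exists a b : 'I_n -> R,
    nonoverlapping a b /\ x = (pvar_sum p f a b)%:E].

Definition Varp (p : R) (g : R -> R) : \bar R :=
  ereal_sup [set x | exists n (a b : 'I_n -> R),
    nonoverlapping a b /\ x = (pvar_sum p g a b)%:E].

Definition Linf01 (h : R -> R) : \bar R :=
  ereal_inf [set M : \bar R | (@lebesgue_measure R).-negligible
    ([set x | 0 <= x <= 1] `&` [set x | (M < (`|h x|)%:E)%E])].

Definition Kfun (p : R) (f : R -> R) (t : R) : \bar R :=
  ereal_inf [set x | exists2 g : R -> R, (Varp p g < +oo)%E &
    x = (Linf01 (fun y => (f y - g y)%R) + t%:E * Varp p g)%E].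

Definition nindex (p t : R) : nat := Num.truncn ((Num.truncn t^-1)%:R `^ p).

End Defs.

(* Main.v *)
Require Import Defs.
From HB Require Import structures.
From mathcomp Require Import all_boot all_order all_algebra.
From mathcomp Require Import all_classical all_reals all_analysis.
Import Order.TTheory GRing.Theory Num.Theory.
Import numFieldNormedType.Exports.
Local Open Scope classical_set_scope.
Local Open Scope ring_scope.
From mathcomp Require Import ring lra.
Lemma cont_pt (R : realType) (f : R -> R) :
  {within `[0, 1]%classic, continuous f} ->
  forall x, 0 <= x <= 1 -> forall e, 0 < e -> exists2 r, 0 < r &
   forall y, 0 <= y <= 1 -> `|x - y| < r -> `|f x - f y| < e.
Proof.
move=> hf x hx e he.
have Ax : `[0, 1]%classic x by rewrite /= in_itv.
have := (proj1 (subspace_continuousP _ _) hf x Ax).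
move/cvgrPdist_lt/(_ e he).
rewrite near_withinE => /nbhs_ballP [r /= r0 hr].
exists r => // y hy hxy; apply: hr => /=.
  by rewrite -ball_normE /=.
by rewrite in_itv.
Qed.
Lemma unif_cont (R : realType) (f : R -> R) :
  {within `[0, 1]%classic, continuous f} ->
  forall e, 0 < e -> exists2 r, 0 < r &
   forall x y, 0 <= x <= 1 -> 0 <= y <= 1 -> `|x - y| < r -> `|f x - f y| < e.
Proof.
move=> hf e he.
have := @segment_compact R 0 1.
move/compact_near_coveringP/near_covering_withinP.
move=> /(_ R (0^'+) (fun r x => forall y, 0 <= y <= 1 -> `|x - y| < r -> `|f x - f y| < e)).
have e2 : 0 < e / 2 by rewrite divr_gt0.
case.
- move=> x Ax.
  have hx : 0 <= x <= 1 by move: Ax; rewrite /= in_itv.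
  have [r r0 hr] := @cont_pt R f hf x hx _ e2.
  exists (ball x (r / 2), [set s | 0 < s < r / 2]) => /=.
    split; first by apply: nbhsx_ballx; rewrite divr_gt0.
    near=> s; apply/andP; split; near: s; first exact: nbhs_right_gt.
    by apply: nbhs_right_lt; rewrite divr_gt0.
  move=> [x' s] /= [hx' /andP[s0 sr]] Ax' y hy hxy.
  have hx'1 : 0 <= x' <= 1 by move: Ax'; rewrite /= in_itv.
  move: hx'; rewrite -ball_normE /= => hx'.
  have hr2 : r / 2 < r by rewrite ltr_pdivrMr // ltr_pMr // ltr1n.
  have h1 := hr _ hx'1 (lt_trans hx' hr2).
  have h3 : `|x - y| < r.
    apply: (le_lt_trans (ler_distD x' x y)).
    have -> : r = r / 2 + r / 2 by rewrite -splitr.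
    by apply: ltrD => //; apply: lt_trans sr.
  have h2 := hr _ hy h3.
  apply: (le_lt_trans (ler_distD (f x) (f x') (f y))).
  rewrite (splitr e) distrC; exact: ltrD.
- move=> d d0 hd; exists (d / 2); first by rewrite divr_gt0.
  move=> x y hx hy hxy.
  have hd2 : 0 < d / 2 by rewrite divr_gt0.
  apply: (hd (d / 2)) => //.
  by rewrite /ball_ /= sub0r normrN gtr0_norm // ltr_pdivrMr // ltr_pMr // ltr1n.
Unshelve. all: by end_near.
Qed.
Lemma neg_point (R : realType) (N : set R) a b :
  (@lebesgue_measure R).-negligible N -> a < b ->
  exists x, a <= x <= b /\ ~ N x.
Proof.
move=> [A [mA A0 NA]] ab.
apply: contrapT => hn.
have sub : `[a, b]%classic `<=` A.
  move=> x /=; rewrite in_itv /= => hx; apply: NA.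
  by apply: contrapT => nx; apply: hn; exists x.
have := le_measure (@lebesgue_measure R) _ _ sub.
rewrite !inE => /(_ (measurable_itv _) mA).
have hm := @lebesgue_measure_itv R `[a, b].
move: hm => /=; rewrite lte_fin ab A0 => ->.
rewrite lee_fin subr_le0 => ba.
by move: (lt_le_trans ab ba); rewrite ltxx.
Qed.

Section Pow.
Context {R : realType}.
Implicit Types x y p : R.

Lemma pw_mono p x y : 0 <= p -> 0 <= x -> x <= y -> x `^ p <= y `^ p.
Proof.
move=> p0 x0 xy; apply: ge0_ler_powR => //; rewrite nnegrE //.
exact: le_trans xy.
Qed.
Arguments pw_mono {p x y}.



Lemma pw_inv p x : 0 < p -> 0 <= x -> (x `^ p) `^ p^-1 = x.
Proof. by move=> p0 x0; rewrite -powRrM mulfV ?gt_eqF // powRr1. Qed.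
Arguments pw_inv {p x}.



Lemma pw_inv' p x : 0 < p -> 0 <= x -> (x `^ p^-1) `^ p = x.
Proof. by move=> p0 x0; rewrite -powRrM mulVf ?gt_eqF // powRr1. Qed.
Arguments pw_inv' {p x}.



Lemma pw_le1 p x : 1 <= p -> 0 <= x <= 1 -> x `^ p <= x.
Proof.
move=> p1 /andP[x0 x1]; have [->|xn0] := eqVneq x 0.
  by rewrite powR0 // gt_eqF // (lt_le_trans ltr01 p1).
by apply: ge1r_powR => //; rewrite lt_neqAle eq_sym xn0 x0.
Qed.
Arguments pw_le1 {p x}.



Lemma pw_super p x y : 1 <= p -> 0 <= x -> 0 <= y ->
  x `^ p + y `^ p <= (x + y) `^ p.
Proof.
move=> p1 x0 y0; have p0 : 0 < p by apply: lt_le_trans p1.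
have [s0|s0] := eqVneq (x + y) 0.
  have x00 : x = 0 by lra.
  have y00 : y = 0 by lra.
  by rewrite x00 y00 addr0 powR0 ?gt_eqF // addr0.
have sp : 0 < x + y by rewrite lt_neqAle eq_sym s0 addr_ge0.
have key : forall a b, 0 <= a <= 1 -> 0 <= b <= 1 -> a + b = 1 ->
    ((x + y) * a) `^ p + ((x + y) * b) `^ p <= (x + y) `^ p.
  move=> a b ha hb ab.
  have a0 : 0 <= a by case/andP: ha.
  have b0 : 0 <= b by case/andP: hb.
  rewrite !powRM ?addr_ge0 // -mulrDr.
  rewrite -[X in _ <= X]mulr1 ler_wpM2l ?powR_ge0 // -ab.
  exact: lerD (pw_le1 p1 ha) (pw_le1 p1 hb).
have hx : x = (x + y) * (x / (x + y)) by rewrite mulrC divfK.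
have hy : y = (x + y) * (y / (x + y)) by rewrite mulrC divfK.
rewrite [X in X `^ p + _]hx [X in _ + X `^ p]hy.
apply: key.
- by rewrite divr_ge0 ?addr_ge0 //= ler_pdivrMr //; lra.
- by rewrite divr_ge0 ?addr_ge0 //= ler_pdivrMr //; lra.
- by rewrite -mulrDl mulfV.
Qed.
Arguments pw_super {p x y}.



Lemma pw_tri p x c : 0 <= p -> 0 <= x -> 0 <= c ->
  (x + c) `^ p <= 2 `^ p * (x `^ p + c `^ p).
Proof.
move=> p0 x0 c0; have [xc|cx] := leP x c.
- apply: (le_trans (pw_mono p0 _ (_ : x + c <= 2 * c))); first exact: addr_ge0.
    lra.
  rewrite powRM // ler_wpM2l ?powR_ge0 // lerDr powR_ge0 //.
- apply: (le_trans (pw_mono p0 _ (_ : x + c <= 2 * x))); first exact: addr_ge0.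
    lra.
  rewrite powRM // ler_wpM2l ?powR_ge0 // lerDl powR_ge0 //.
Qed.
Arguments pw_tri {p x c}.



End Pow.
Arguments pw_mono {R p x y}.
Arguments pw_inv {R p x}.
Arguments pw_inv' {R p x}.
Arguments pw_le1 {R p x}.
Arguments pw_super {R p x y}.
Arguments pw_tri {R p x c}.


Lemma sum_nth_pad (R : realType) (n : nat) (L : seq R) : (size L <= n)%N ->
  \sum_(i < n) nth 0 L i = \sum_(x <- L) x.
Proof.
move=> hL.
rewrite (big_nth 0) big_mkord -(subnKC hL) big_split_ord /=.
rewrite [X in _ + X]big1 ?addr0 //.
move=> i _; rewrite nth_default //; exact: leq_addr.
Qed.

Lemma select (R : realType) (m n : nat) (A B : 'I_m -> R) (J : {set 'I_m}) :
  (forall j, j \in J -> 0 <= A j /\ A j <= B j /\ B j <= 1) ->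
  (forall i j, i \in J -> j \in J -> i != j -> B i <= A j \/ B j <= A i) ->
  exists a b : 'I_n -> R, nonoverlapping a b /\
    (forall i : 'I_n, (i < #|J|)%N -> exists2 j, j \in J & a i = A j /\ b i = B j) /\
    (forall F : R -> R -> R, F 0 0 = 0 -> (#|J| <= n)%N ->
        \sum_(i < n) F (a i) (b i) = \sum_(j in J) F (A j) (B j)).
Proof.
move=> hAB hov.
set s := enum J.
have ss : size s = #|J| by rewrite /s -cardE.
have us : uniq s by rewrite /s enum_uniq.
pose a := fun i : 'I_n => nth 0 (map A s) i.
pose b := fun i : 'I_n => nth 0 (map B s) i.
have hin : forall i : nat, (i < size s)%N -> exists x1 : 'I_m, true.
  move=> i; case: (s) => [//|x _ _]; by exists x.
have hab : forall i : 'I_n, forall x1, (i < size s)%N ->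
    a i = A (nth x1 s i) /\ b i = B (nth x1 s i) /\ nth x1 s i \in J.
  move=> i x1 hi; rewrite /a /b !(nth_map x1) //; split => //; split => //.
  by rewrite -(mem_enum (mem J)) -/s mem_nth.
have hout : forall i : 'I_n, (size s <= i)%N -> a i = 0 /\ b i = 0.
  by move=> i hi; rewrite /a /b !nth_default ?size_map.
exists a, b; split; [split|split].
- move=> i; case: (ltnP i (size s)) => hi.
    have [x1 _] := hin _ hi.
    by have [-> [-> hj]] := hab i x1 hi; apply: hAB.
  by have [-> ->] := hout i hi; rewrite lexx ler01.
- move=> i j ij.
  have pos : forall k : 'I_n, 0 <= a k.
    move=> k; case: (ltnP k (size s)) => hk.
      have [x1 _] := hin _ hk.
      by have [-> [_ hj]] := hab k x1 hk; case: (hAB _ hj).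
    by have [-> _] := hout k hk.
  case: (ltnP i (size s)) => hi; last by left; have [_ ->] := hout i hi.
  case: (ltnP j (size s)) => hj; last by right; have [_ ->] := hout j hj.
  have [x1 _] := hin _ hi.
  have [-> [-> hJi]] := hab i x1 hi.
  have [-> [-> hJj]] := hab j x1 hj.
  apply: hov => //.
  by rewrite nth_uniq // -(inj_eq val_inj).
- move=> i hi; rewrite -ss in hi.
  have [x1 _] := hin _ hi.
  have [-> [-> hJi]] := hab i x1 hi.
  by exists (nth x1 s i).
- move=> F F0 hJ.
  have -> : \sum_(j in J) F (A j) (B j) = \sum_(j <- s) F (A j) (B j) by rewrite /s big_enum.
  have -> : \sum_(j <- s) F (A j) (B j) = \sum_(x <- map (fun j => F (A j) (B j)) s) x
    by rewrite big_map.
  rewrite -(@sum_nth_pad _ n) ?size_map ?ss //.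
  apply: eq_bigr => i _.
  case: (ltnP i (size s)) => hi.
    have [x1 _] := hin _ hi.
    have [-> [-> _]] := hab i x1 hi.
    by rewrite (nth_map x1).
  have [-> ->] := hout i hi.
  by rewrite nth_default ?size_map.
Qed.

Fixpoint sig {R : realType} (f : R -> R) (d : R) (N : nat) (i : nat) : nat :=
  if i is i'.+1 then
    let s := sig f d N i' in
    if d < `|f (i'.+1%:R / N%:R) - f (s%:R / N%:R)| then i'.+1 else s
  else 0%N.

Section Sig.
Context {R : realType} (f : R -> R) (d : R) (N : nat).
Local Notation sg := (sig f d N).

Lemma sig_le i : (sg i <= i)%N.
Proof.
elim: i => [//|i IH] /=.
by case: ifP => // _; apply: leq_trans IH _.
Qed.

Lemma sig_step i : (sg i <= sg i.+1)%N.
Proof. by rewrite /=; case: ifP => // _; apply: leq_trans (sig_le i) _. Qed.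

Lemma sig_mon i k : (i <= k)%N -> (sg i <= sg k)%N.
Proof.
elim: k => [|k IH]; first by rewrite leqn0 => /eqP ->.
rewrite leq_eqVlt => /orP[/eqP -> //|]; rewrite ltnS => /IH h.
exact: leq_trans h (sig_step k).
Qed.

Lemma sig_fix v : sg v = v -> (0 < v)%N ->
  d < `|f (v%:R / N%:R) - f ((sg v.-1)%:R / N%:R)|.
Proof.
case: v => [//|v] /=.
case: ifP => // _ h; have := sig_le v; rewrite h ltnn //.
Qed.

Lemma sig_idem i : sg (sg i) = sg i.
Proof.
elim: i => [//|i IH].
have [h|h] := eqVneq (sg i.+1) (sg i); first by rewrite h.
have -> : sg i.+1 = i.+1.
  by move: h; rewrite /=; case: ifP => // _; rewrite eqxx.
rewrite /=; case: ifP => // Hc.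
by move: h; rewrite /= Hc eqxx.
Qed.

Lemma sig_close i : 0 <= d -> `|f (i%:R / N%:R) - f ((sg i)%:R / N%:R)| <= d.
Proof.
move=> d0; case: i => [|i] /=; first by rewrite subrr normr0.
case: ifP => [_|]; first by rewrite subrr normr0.
by move/negbT; rewrite -leNgt.
Qed.

Lemma sig_key i k : (i <= k)%N -> (sg i < sg k)%N ->
  [/\ (0 < sg k)%N, (sg i <= sg (sg k).-1)%N &
   d < `|f ((sg k)%:R / N%:R) - f ((sg (sg k).-1)%:R / N%:R)|].
Proof.
move=> ik lt.
have v0 : (0 < sg k)%N by apply: leq_ltn_trans lt.
split => //; last by apply: sig_fix => //; apply: sig_idem.
apply: sig_mon.
rewrite -ltnS prednK //; rewrite ltnNge; apply/negP => h.
have := sig_mon _ _ h; rewrite sig_idem => h2.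
by move: (leq_trans lt h2); rewrite ltnn.
Qed.

End Sig.

Lemma natdiv_mono (R : realType) (N i k : nat) : (i <= k)%N ->
  (i%:R / N%:R : R) <= k%:R / N%:R.
Proof. by move=> ik; rewrite ler_wpM2r ?invr_ge0 ?ler0n // ler_nat. Qed.

Lemma natdiv01 (R : realType) (N i : nat) : (0 < N)%N -> (i <= N)%N ->
  0 <= (i%:R / N%:R : R) <= 1.
Proof.
move=> N0 iN; rewrite divr_ge0 ?ler0n //= ler_pdivrMr ?ltr0n // mul1r ler_nat //.
Qed.

Lemma construct (R : realType) (p : R) (f : R -> R) :
  {within `[0, 1]%classic, continuous f} ->
  forall (n : nat) (U d : R), 1 <= p -> 0 < d ->
  (forall a b : 'I_n -> R, nonoverlapping a b -> pvar_sum p f a b <= U) ->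
  U `^ p < n%:R * d `^ p ->
  exists g : R -> R, (forall x, 0 <= x <= 1 -> `|f x - g x| <= 2 * d) /\
    (forall m (a b : 'I_m -> R), nonoverlapping a b -> pvar_sum p g a b <= U).
Proof.
move=> hf n U d p1 d0 hU hnd.
have p0 : 0 < p by apply: lt_le_trans p1.
have [eta eta0 heta] := @unif_cont R f hf d d0.
pose N := (Num.truncn eta^-1).+1.
have N0 : (0 < N)%N by [].
have hN : (N%:R : R)^-1 < eta.
  rewrite -[eta]invrK ltf_pV2 ?posrE ?invr_gt0 ?ltr0n //.
  exact: truncnS_gt.
pose ix := fun x : R => Num.truncn (x * N%:R).
pose sg := sig f d N.
pose g := fun x : R => f ((sg (ix x))%:R / N%:R).
have ixN : forall x, 0 <= x <= 1 -> (ix x <= N)%N.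
  move=> x /andP[x0 x1]; rewrite /ix -[X in (_ <= X)%N](@natrK R N).
  by apply: le_truncn; rewrite ler_piMl ?ler0n.
have ixmon : forall x y, 0 <= x -> x <= y -> (ix x <= ix y)%N.
  by move=> x y x0 xy; apply: le_truncn; rewrite ler_wpM2r ?ler0n.
exists g; split.
  move=> x hx; have [x0 x1] := andP hx.
  have hi := ixN x hx.
  have xN0 : 0 <= x * N%:R by rewrite mulr_ge0 ?ler0n.
  have [lo hi'] := andP (truncn_itv xN0).
  have h1 : `|f x - f ((ix x)%:R / N%:R)| < d.
    apply: heta => //; first exact: natdiv01.
    have e1 : (ix x)%:R / N%:R <= x by rewrite ler_pdivrMr ?ltr0n.
    have e2 : x - (ix x)%:R / N%:R < N%:R^-1.
      have -> : x - (ix x)%:R / N%:R = (x * N%:R - (ix x)%:R) / N%:R.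
        by rewrite mulrBl mulfK // pnatr_eq0 -lt0n.
      rewrite ltr_pdivrMr ?ltr0n // mulVf ?pnatr_eq0 -?lt0n //.
      rewrite -natr1 in hi'; rewrite /ix in hi' *; lra.
    by rewrite ger0_norm ?subr_ge0 //; apply: lt_trans e2 hN.
  have h2 := sig_close f d N (ix x) (ltW d0).
  apply: (le_trans (ler_distD (f ((ix x)%:R / N%:R)) _ _)).
  rewrite mulr2n mulrDl mul1r; apply: lerD; first exact: ltW.
  exact: h2.
move=> m a b [ha hov].
pose u := fun j => sg (ix (a j)).
pose v := fun j => sg (ix (b j)).
have huv : forall j, (u j <= v j)%N.
  move=> j; have [a0 [ab _]] := ha j; apply: sig_mon; exact: ixmon.
have hvN : forall j, (v j <= N)%N.
  move=> j; have [a0 [ab b1]] := ha j.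
  apply: leq_trans (sig_le _ _ _ _) _; apply: ixN.
  by rewrite b1 (le_trans a0 ab).
have hov' : forall i j, i != j -> (v i <= u j)%N \/ (v j <= u i)%N.
  move=> i j ij; have [a0 [ab b1]] := ha i; have [a0' [ab' b1']] := ha j.
  case: (hov i j ij) => h; [left|right]; apply: sig_mon; apply: ixmon => //.
  - exact: le_trans ab.
  - exact: le_trans ab'.
pose X := fun k : nat => (k%:R / N%:R : R).
pose F := fun x y : R => `|f y - f x| `^ p.
have F0 : F 0 0 = 0 by rewrite /F subrr normr0 powR0 // gt_eqF.
pose J : {set 'I_m} := [set j | (u j < v j)%N]%SET.
have hsum : \sum_(j < m) `|g (b j) - g (a j)| `^ p =
    \sum_(j in J) F (X (u j)) (X (v j)).
  rewrite [RHS]big_mkcond /=; apply: eq_bigr => j _.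
  rewrite /J inE; case: ifP => // hj.
  have e : u j = v j by apply/eqP; rewrite eqn_leq huv leqNgt hj.
  change (`|f (X (v j)) - f (X (u j))| `^ p = 0).
  by rewrite e subrr normr0 powR0 // gt_eqF.
have XN : forall k, (k <= N)%N -> 0 <= X k <= 1 by move=> k hk; exact: natdiv01.
case: (leqP #|J| n) => hJ.
  have c1 : forall j, j \in J -> 0 <= X (u j) /\ X (u j) <= X (v j) /\ X (v j) <= 1.
    move=> j _.
    have [h0 h1] := andP (XN _ (leq_trans (huv j) (hvN j))).
    have [h2 h3] := andP (XN _ (hvN j)).
    by split => //; split => //; apply: natdiv_mono.
  have c2 : forall i j, i \in J -> j \in J -> i != j ->
      X (v i) <= X (u j) \/ X (v j) <= X (u i).
    by move=> i j _ _ ij; case: (hov' i j ij) => h; [left|right]; apply: natdiv_mono.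
  have [a' [b' [hab' [_ hsum']]]] := @select R m n _ _ J c1 c2.
  rewrite /pvar_sum hsum -(hsum' F F0 hJ).
  exact: hU.
exfalso.
have hkey : forall j, j \in J -> [/\ (0 < v j)%N, (u j <= sg (v j).-1)%N &
    d < `|f (X (v j)) - f (X (sg (v j).-1))|].
  move=> j; rewrite /J inE => hj; have [a0 [ab _]] := ha j.
  by apply: sig_key => //; apply: ixmon.
have c1 : forall j, j \in J -> 0 <= X (sg (v j).-1) /\ X (sg (v j).-1) <= X (v j) /\ X (v j) <= 1.
  move=> j hj; have [v0 _ _] := hkey j hj.
  have h1 : (sg (v j).-1 <= v j)%N.
    apply: leq_trans (sig_le _ _ _ _) _; exact: leq_pred.
  have [h2 h3] := andP (XN _ (leq_trans h1 (hvN j))).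
  have [h4 h5] := andP (XN _ (hvN j)).
  by split => //; split => //; apply: natdiv_mono.
have c2 : forall i j, i \in J -> j \in J -> i != j ->
    X (v i) <= X (sg (v j).-1) \/ X (v j) <= X (sg (v i).-1).
  move=> i j hi hj ij.
  have [_ hi' _] := hkey i hi; have [_ hj' _] := hkey j hj.
  case: (hov' i j ij) => h; [left|right]; apply: natdiv_mono.
  - exact: leq_trans hj'.
  - exact: leq_trans hi'.
have [a' [b' [hab' [hpick _]]]] := @select R m n _ _ J c1 c2.
have hs : \sum_(i < n) F (a' i) (b' i) <= U `^ p.
  have := hU a' b' hab'; rewrite /pvar_sum => h.
  rewrite -(@pw_inv' R p (\sum_(i < n) F (a' i) (b' i))) //.
    by apply: pw_mono => //; [exact: ltW | exact: powR_ge0].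
  by apply: sumr_ge0 => i _; exact: powR_ge0.
have hs2 : n%:R * d `^ p <= \sum_(i < n) F (a' i) (b' i).
  have -> : n%:R * d `^ p = \sum_(i < n) d `^ p by rewrite sumr_const card_ord mulr_natl.
  apply: ler_sum => i _.
  have [j hj [-> ->]] := hpick i (ltn_trans (ltn_ord i) hJ).
  have [_ _ hd] := hkey j hj.
  apply: pw_mono; [exact: ltW | exact: ltW | exact: ltW].
by move: (le_lt_trans (le_trans hs2 hs) hnd); rewrite ltxx.
Qed.


Lemma lower_fam (R : realType) (p : R) (f g : R -> R) :
  {within `[0, 1]%classic, continuous f} ->
  forall (n : nat) (V K t e : R), 1 <= p -> 0 < t -> n%:R `^ p^-1 * t <= 1 ->
  0 <= K -> 0 <= V -> 0 < e ->
  (forall a b : 'I_n -> R, nonoverlapping a b -> pvar_sum p g a b <= V) ->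
  (forall a b, 0 <= a -> a < b -> b <= 1 -> exists x, a <= x <= b /\ `|f x - g x| <= K) ->
  forall a b : 'I_n -> R, nonoverlapping a b ->
  pvar_sum p f a b <= 2 * V + 2 * (2 * K + 2 * e) / t.
Proof.
move=> hf n V K t e p1 t0 hnt K0 V0 e0 hV hpt a b [ha hov].
have p0 : 0 < p by apply: lt_le_trans p1.
have [eta eta0 heta] := @unif_cont R f hf e e0.
pose c := 2 * K + 2 * e.
have c0 : 0 <= c by rewrite /c; lra.
have hq : forall j, exists q : R * R, [/\ a j <= q.1, q.1 <= q.2, q.2 <= b j &
    `|f (b j) - f (a j)| <= `|g q.2 - g q.1| + c].
  move=> j; have [a0 [ab b1]] := ha j.
  case: (ltP (a j) (b j)) => hab; last first.
    have e1 : a j = b j by apply/eqP; rewrite eq_le ab hab.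
    exists (a j, a j); split => //=; by rewrite e1 !subrr !normr0 add0r.
  pose r := Num.min (eta / 2) ((b j - a j) / 2).
  have r0 : 0 < r by rewrite /r lt_min !divr_gt0 // subr_gt0.
  have r1 : r <= eta / 2 by rewrite /r ge_min lexx.
  have r2 : r <= (b j - a j) / 2 by rewrite /r ge_min lexx orbT.
  have [x1 [/andP[hx1 hx1'] hK1]] : exists x, a j <= x <= a j + r /\ `|f x - g x| <= K.
    by apply: hpt => //; lra.
  have [x2 [/andP[hx2 hx2'] hK2]] : exists x, b j - r <= x <= b j /\ `|f x - g x| <= K.
    by apply: hpt => //; lra.
  exists (x1, x2) => /=; split => //; try lra.
  have h1 : `|f (a j) - f x1| < e.
    apply: heta; rewrite ?a0 ?(le_trans ab b1) //=; try lra.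
    rewrite ler0_norm; lra.
  have h2 : `|f (b j) - f x2| < e.
    apply: heta; rewrite ?b1 ?(le_trans a0 ab) //=; try lra.
    rewrite ger0_norm; lra.
  move: h1 h2 hK1 hK2; rewrite !ltr_norml !ler_norml => /andP[h1 h1'] /andP[h2 h2'].
  move=> /andP[k1 k1'] /andP[k2 k2'].
  have n1 := ler_norm (g x2 - g x1).
  have n2 : - (g x2 - g x1) <= `|g x2 - g x1| by rewrite -normrN ler_norm.
  apply/andP; split; rewrite /c; lra.
have [F hF] := choice hq.
pose a' := fun j => (F j).1.
pose b' := fun j => (F j).2.
have hab' : nonoverlapping a' b'.
  split.
    move=> j; have [h1 h2 h3 _] := hF j; have [a0 [ab b1]] := ha j.
    rewrite /a' /b'; split; [lra|split; lra].
  move=> i j ij; have [h1 h2 h3 _] := hF i; have [h1' h2' h3' _] := hF j.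
  rewrite /a' /b'; case: (hov i j ij) => h; [left|right]; lra.
pose Sg := \sum_(j < n) `|g (b' j) - g (a' j)| `^ p.
have Sg0 : 0 <= Sg by apply: sumr_ge0 => j _; exact: powR_ge0.
have hSg : Sg <= V `^ p.
  have := hV a' b' hab'; rewrite /pvar_sum -/Sg => h.
  rewrite -(@pw_inv' R p Sg) //.
  by apply: pw_mono => //; [exact: ltW | exact: powR_ge0].
pose w := n%:R `^ p^-1.
have w0 : 0 <= w by exact: powR_ge0.
have hnc : \sum_(j < n) c `^ p = (w * c) `^ p.
  rewrite sumr_const card_ord powRM // /w pw_inv' ?ler0n //.
  by rewrite mulr_natl.
have hSf : \sum_(j < n) `|f (b j) - f (a j)| `^ p <= (2 * (V + w * c)) `^ p.
  apply: (@le_trans _ _ (\sum_(j < n) 2 `^ p * (`|g (b' j) - g (a' j)| `^ p + c `^ p))).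
    apply: ler_sum => j _; have [_ _ _ h] := hF j.
    apply: le_trans _ (pw_tri (ltW p0) (normr_ge0 _) c0).
    by apply: pw_mono => //; exact: ltW.
  rewrite -mulr_sumr big_split /= -/Sg hnc [X in _ <= X]powRM //; last first.
    by rewrite addr_ge0 // mulr_ge0.
  rewrite ler_wpM2l ?powR_ge0 //.
  apply: le_trans _ (pw_super p1 V0 (mulr_ge0 w0 c0)).
  by rewrite lerD2r.
rewrite /pvar_sum.
apply: (@le_trans _ _ (2 * (V + w * c))).
  rewrite -[X in _ <= X](@pw_inv R p (2 * (V + w * c))) //; last first.
    by rewrite mulr_ge0 // addr_ge0 // mulr_ge0.
  apply: pw_mono => //; first by rewrite invr_ge0 ltW.
  by apply: sumr_ge0 => j _; exact: powR_ge0.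
have : w * c <= c / t.
  rewrite ler_pdivlMr // mulrAC.
  by rewrite -[X in _ <= X]mul1r ler_wpM2r.
rewrite -/c => h.
have -> : 2 * c / t = 2 * (c / t) by rewrite mulrA.
lra.
Qed.

Lemma nindex_facts (R : realType) (p t : R) : 1 <= p -> 0 < t -> t <= 1 ->
  (nindex p t)%:R `^ p^-1 * t <= 1 /\ 1 <= (nindex p t)%:R * (4 * t) `^ p.
Proof.
move=> p1 t0 t1; have p0 : 0 < p by apply: lt_le_trans p1.
rewrite /nindex; set m := Num.truncn t^-1; set P := m%:R `^ p.
have ti : 1 <= t^-1 by rewrite -invr1 lef_pV2 ?posrE.
have m1 : (1 <= m)%N by rewrite /m truncn_gt0.
have m1' : 1 <= (m%:R : R) by rewrite ler1n.
have mt : (m%:R : R) <= t^-1 by rewrite /m truncn_le ltW // (lt_le_trans ltr01 ti).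
have mt2 : t^-1 < m.+1%:R by exact: truncnS_gt.
have P1 : 1 <= P.
  have := @pw_mono R p 1 m%:R (ltW p0) ler01 m1'.
  by rewrite /P => h; apply: le_trans h; rewrite powR1.
have P0 : 0 <= P by apply: le_trans P1.
set n := Num.truncn P.
have nP : (n%:R : R) <= P by rewrite /n truncn_le.
have Pn : P < n.+1%:R by exact: truncnS_gt.
split.
  apply: (@le_trans _ _ (t^-1 * t)); last by rewrite mulVf ?gt_eqF.
  rewrite ler_pM2r //.
  apply: (@le_trans _ _ (P `^ p^-1)).
    by apply: pw_mono => //; rewrite invr_ge0 ltW.
  by rewrite /P pw_inv // ler0n.
have n1 : (1 <= n)%N by rewrite /n truncn_gt0.
have n1' : 1 <= (n%:R : R) by rewrite ler1n.
have h2n : P <= 2 * n%:R by move: Pn; rewrite -natr1; lra.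
have tm : 1 < t * (m%:R + 1).
  by rewrite -ltr_pdivrMl // mulr1 natr1.
have h4 : 2 <= 4 * t * m%:R by nra.
have h22 : 2 <= 2 `^ p.
  have := @ler_powR R 2 (ler1n _ 2) 1 p p1.
  by rewrite powRr1.
have hQ : 2 <= P * (4 * t) `^ p.
  have t0' : 0 <= 4 * t by rewrite mulr_ge0 // ltW.
  rewrite /P -powRM ?ler0n //.
  apply: (le_trans h22); apply: pw_mono => //; first exact: ltW.
  by rewrite mulrC.
have Q0 : 0 <= (4 * t) `^ p by exact: powR_ge0.
have : P * (4 * t) `^ p <= 2 * n%:R * (4 * t) `^ p by rewrite ler_wpM2r.
nra.
Qed.

Lemma zero_fam (R : realType) (n : nat) : nonoverlapping (fun _ : 'I_n => 0 : R) (fun _ => 0).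
Proof. by split => [j|i j _]; [rewrite lexx ler01 | left]. Qed.

Lemma pvar_zero (R : realType) (p : R) (g : R -> R) n : 0 < p ->
  pvar_sum p g (fun _ : 'I_n => 0 : R) (fun _ => 0) = 0.
Proof.
move=> p0; rewrite /pvar_sum big1 ?powR0 ?invr_eq0 ?gt_eqF //.
by move=> j _; rewrite subrr normr0 powR0 ?gt_eqF.
Qed.

Lemma upsilon_ge0 (R : realType) (p : R) n f : 0 < p -> (0 <= upsilon p n f)%E.
Proof.
move=> p0; apply: ereal_sup_ubound; exists (fun _ => 0), (fun _ => 0).
by split; [exact: zero_fam | rewrite pvar_zero].
Qed.

Lemma Varp_ge0 (R : realType) (p : R) g : 0 < p -> (0 <= Varp p g)%E.
Proof.
move=> p0; apply: ereal_sup_ubound; exists 0%N, (fun _ => 0), (fun _ => 0).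
by split; [exact: zero_fam | rewrite pvar_zero].
Qed.

Lemma linf_pt (R : realType) (h : R -> R) (K : R) :
  (Linf01 h < K%:E)%E ->
  forall a b, 0 <= a -> a < b -> b <= 1 -> exists x, a <= x <= b /\ `|h x| <= K.
Proof.
move=> /ereal_inf_lt [y hy yK] a b a0 ab b1.
have [x [/andP[ax xb] nx]] := neg_point _ _ _ _ hy ab.
exists x; split; first by rewrite ax.
have : ~ (y < `|h x|%:E)%E.
  move=> hyx; apply: nx; split => //.
  by rewrite /= (le_trans a0 ax) (le_trans xb b1).
move/negP; rewrite -leNgt => hle.
by rewrite -lee_fin (le_trans hle) // ltW.
Qed.

Lemma linf_ge0 (R : realType) (h : R -> R) : (0 <= Linf01 h)%E.
Proof.
apply: le_ereal_inf_tmp => y hy.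
rewrite leNgt; apply/negP => y0.
have [x [/andP[x0 x1] nx]] := neg_point _ _ _ _ hy (@ltr01 R).
apply: nx; split; first by rewrite /= x0 x1.
by apply: lt_le_trans y0 _; rewrite lee_fin normr_ge0.
Qed.

Theorem theorem4p2 (R : realType) (p : R) : 1 <= p ->
  exists c1 c2 : R, 0 < c1 /\ c1 <= c2 /\
  forall f : R -> R, {within `[0, 1]%classic, continuous f} ->
  forall t : R, 0 < t -> t <= 1 ->
    ((c1 * t)%:E * upsilon p (nindex p t) f <= Kfun p f t)%E /\
    (Kfun p f t <= (c2 * t)%:E * upsilon p (nindex p t) f)%E.
Proof.
move=> p1; have p0 : 0 < p by apply: lt_le_trans p1.
exists (4^-1), 9; split; first by rewrite invr_gt0.
split; first by lra.
move=> f hf t t0 t1.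
have [hn1 hn2] := @nindex_facts R p t p1 t0 t1.
set n := nindex p t in hn1 hn2 *.
have ups0 := @upsilon_ge0 R p n f p0.
split.
- apply: le_ereal_inf_tmp => y [g hVg ->].
  have Vg0 := @Varp_ge0 R p g p0.
  have [V EV] : exists V, Varp p g = V%:E.
    move: Vg0 hVg; case: (Varp p g) => [V| |] //; by exists V.
  have V0 : 0 <= V by rewrite -lee_fin -EV.
  have L0 := @linf_ge0 R (fun y => f y - g y).
  case EL: (Linf01 (fun y => f y - g y)) => [M| |]; last by rewrite EL in L0.
    2: by rewrite EV -EFinM /= leey.
  have M0 : 0 <= M by rewrite -lee_fin -EL.
  rewrite EV -EFinM -EFinD.
  have hVfam : forall a b : 'I_n -> R, nonoverlapping a b -> pvar_sum p g a b <= V.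
    move=> a b hab; rewrite -lee_fin -EV; apply: ereal_sup_ubound.
    by exists n, a, b.
  have hfam : forall a b : 'I_n -> R, nonoverlapping a b ->
      pvar_sum p f a b <= 4 / t * (M + t * V).
    move=> a b hab.
    apply/ler_addgt0Pr => dl dl0.
    pose e := dl * t / 8.
    have e0 : 0 < e by rewrite /e divr_gt0 // mulr_gt0.
    have hK : (Linf01 (fun y => (f y - g y)%R) < (M + e)%:E)%E.
      by rewrite EL lte_fin ltrDl.
    have := @lower_fam R p f g hf n V (M + e) t e p1 t0 hn1 (addr_ge0 M0 (ltW e0)) V0 e0 hVfam
      (@linf_pt R _ _ hK) a b hab.
    move=> h; apply: (le_trans h).
    have -> : 2 * V + 2 * (2 * (M + e) + 2 * e) / t = 2 * V + 4 * M / t + 8 * e / t.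
      by field; rewrite gt_eqF.
    have -> : 8 * e / t = dl by rewrite /e; field; rewrite gt_eqF.
    have -> : 4 / t * (M + t * V) = 4 * M / t + 4 * V by field; rewrite gt_eqF.
    lra.
  have hup : (upsilon p n f <= (4 / t * (M + t * V))%:E)%E.
    apply: ge_ereal_sup => x [a [b [hab ->]]].
    by rewrite lee_fin; exact: hfam.
  apply: (le_trans (lee_wpmul2l _ hup)).
    by rewrite lee_fin mulr_ge0 // ltW.
  rewrite -EFinM lee_fin.
  have -> : 4^-1 * t * (4 / t * (M + t * V)) = M + t * V by field; rewrite gt_eqF.
  by [].
- case EU: (upsilon p n f) => [U| |]; last by rewrite EU in ups0.
    2: by rewrite mulry gtr0_sg ?mulr_gt0 // mul1e leey.
  have U0 : 0 <= U by rewrite -lee_fin -EU.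
  have hUfam : forall a b : 'I_n -> R, nonoverlapping a b -> pvar_sum p f a b <= U.
    move=> a b hab; rewrite -lee_fin -EU; apply: ereal_sup_ubound.
    by exists a, b.
  apply/lee_addgt0Pr => dl dl0.
  pose d := 4 * t * U + dl / 2.
  have d0 : 0 < d.
    have : 0 <= 4 * t * U by rewrite !mulr_ge0 // ltW.
    have : 0 < dl / 2 by rewrite divr_gt0.
    rewrite /d; lra.
  have t4 : 0 <= 4 * t by rewrite mulr_ge0 // ltW.
  have hnd : U `^ p < n%:R * d `^ p.
    have n0 : 0 < (n%:R : R).
      by rewrite lt_neqAle ler0n andbT; apply/negP => /eqP h; move: hn2; rewrite -h mul0r ler10.
    apply: (@le_lt_trans _ _ (n%:R * (4 * t * U) `^ p)).
      rewrite powRM //.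
      rewrite mulrA -[X in X <= _]mul1r ler_wpM2r ?powR_ge0 //.
    rewrite ltr_pM2l //.
    have hd : 4 * t * U < d.
      have : 0 < dl / 2 by rewrite divr_gt0.
      rewrite /d; lra.
    apply: gt0_ltr_powR => //; rewrite nnegrE ?(ltW d0) //.
    by rewrite !mulr_ge0 // ltW.
  have [g [hg1 hg2]] := @construct R p f hf n U d p1 d0 hUfam hnd.
  have hVg : (Varp p g <= U%:E)%E.
    apply: ge_ereal_sup => x [m [a [b [hab ->]]]].
    by rewrite lee_fin; exact: hg2.
  have hLg : (Linf01 (fun y => (f y - g y)%R) <= (2 * d)%:E)%E.
    apply: ereal_inf_lbound.
    apply: (@negligibleS _ _ _ _ set0); last exact: negligible_set0.
    move=> x [/= hx]; rewrite lte_fin => hlt.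
    by move: (lt_le_trans hlt (hg1 x hx)); rewrite ltxx.
  apply: (@le_trans _ _ (Linf01 (fun y => (f y - g y)%R) + t%:E * Varp p g)%E).
    apply: ereal_inf_lbound; exists g => //.
    by apply: (le_lt_trans hVg); exact: ltry.
  apply: (@le_trans _ _ ((2 * d)%:E + t%:E * U%:E)%E).
    apply: leeD => //; apply: lee_wpmul2l => //.
    by rewrite lee_fin ltW.
  rewrite -!EFinM -!EFinD lee_fin /d.
  lra.
Qed.
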